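(* Let $T_1,\dots,T_k$ be subtrees of a tree $T$ such that $T=T_1\cup\dots\cup T_k$. Then $\operatorname{pw}(T)+1\le \sum_{i=1}^k(\operatorname{pw}(T_i)+1)$.
   Context: $\operatorname{pw}$ denotes pathwidth: the minimum, over all path decompositions (sequences of vertex subsets such that each edge lies in some set and each vertex lies in a non-empty consecutive run of sets), of the maximum set size minus 1. A subtree is a connected subgraph of $T$. *)

(* Defs.v *)
From HB Require Import structures.
From mathcomp Require Import all_boot.
From mathcomp Require Import boolp.
Set Implicit Arguments. Unset Strict Implicit. Unset Printing Implicit Defensive.

Section Graphs.
Variable T : finType.

Definition simple_graph (e : rel T) : Prop :=
  symmetric e /\ irreflexive e.

(* no cycle: no uniq closed e-walk with at least 3 vertices *)
Definition acyclic (e : rel T) : Prop :=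
  forall (x : T) (p : seq T), path e x p -> uniq (x :: p) -> 2 <= size p ->
    ~~ e (last x p) x.

Definition is_tree (e : rel T) : Prop :=
  [/\ simple_graph e, 0 < #|T|, (forall x y : T, connect e x y) & acyclic e].

Definition subgraph (e : rel T) (V : {set T}) (E : rel T) : Prop :=
  symmetric E /\ (forall x y, E x y -> [&& e x y, x \in V & y \in V]).

Definition subtree (e : rel T) (V : {set T}) (E : rel T) : Prop :=
  [/\ subgraph e V E, V != set0 & {in V &, forall x y, connect E x y}].

Definition path_decomposition (V : {set T}) (E : rel T) (s : seq {set T}) : Prop :=
  [/\ all (fun B : {set T} => B \subset V) s,
      (forall x y, E x y -> has (fun B : {set T} => (x \in B) && (y \in B)) s),
      (forall x, x \in V -> has (fun B : {set T} => x \in B) s) &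
      (forall x i j l, i <= j -> j <= l -> l < size s ->
         x \in nth set0 s i -> x \in nth set0 s l -> x \in nth set0 s j)].

Definition pd_width (s : seq {set T}) : nat := (\max_(B <- s) #|B|).-1.

Definition has_pd_of_width (V : {set T}) (E : rel T) : pred nat :=
  fun w => `[< exists s, path_decomposition V E s /\ pd_width s <= w >].

Definition pathwidth (V : {set T}) (E : rel T) : nat :=
  match pselect (exists w, has_pd_of_width V E w) with
  | left h => ex_minn h
  | right _ => 0
  end.

End Graphs.

(* Main.v *)
Require Import Defs.
From mathcomp Require Import all_boot zify boolp.
Set Implicit Arguments. Unset Strict Implicit. Unset Printing Implicit Defensive.

Lemma tree_edge (T : finType) (e R : rel T) :
  simple_graph e -> acyclic e -> (forall x y, R x y -> e x y) ->
  forall x y, connect R x y -> e x y -> R x y.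
Proof.
move=> [esym eirr] eac Re x y /connectP [p pR ->].
case/shortenP: pR => p' p'R up' _.
case: p' p'R up' => [|z [|z2 rest]] p'R up' exy.
- by rewrite /= eirr in exy.
- by move: p'R => /= /andP[].
- have := eac x [:: z, z2 & rest] (sub_path Re p'R) up' isT.
  by rewrite esym exy.
Qed.

Lemma cross_edge (T : finType) (e : rel T) (U : {set T}) x y :
  connect e x y -> x \in U -> y \notin U ->
  exists u w, [/\ e u w, u \in U & w \notin U].
Proof.
move=> /connectP [p pe ->]; elim: p x pe => [|z p IH] x /=.
  by move=> _ ->.
move=> /andP[exz pz] xU lU.
case zU: (z \in U); first exact: IH pz zU lU.
by exists x, z; rewrite zU.
Qed.

Lemma pw_le (T : finType) (V : {set T}) (E : rel T) s :
  path_decomposition V E s -> pathwidth V E <= pd_width s.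
Proof.
move=> ds.
have ex : exists w, has_pd_of_width V E w.
  by exists (pd_width s); apply: asboolT; exists s.
rewrite /pathwidth; case: pselect => [h|//].
case: (ex_minnP h) => m _; apply; rewrite /has_pd_of_width; apply: asboolT; by exists s.
Qed.

Lemma pw_dec (T : finType) (e : rel T) (V : {set T}) (E : rel T) :
  subtree e V E -> exists t, path_decomposition V E t /\
     \max_(B <- t) #|B| <= (pathwidth V E).+1.
Proof.
move=> [[Esym EV] _ _].
have d1 : path_decomposition V E [:: V].
  split => /=.
  - by rewrite subxx.
  - by move=> x y /EV /and3P[_ -> ->].
  - by move=> x ->.
  - move=> x i j l ij jl l1.
    have -> : j = 0 by lia. have -> : i = 0 by lia. have -> : l = 0 by lia.
    done.
have ex : exists w, has_pd_of_width V E w.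
  by exists (pd_width [:: V]); apply: asboolT; exists [:: V].
rewrite /pathwidth; case: pselect => [h|//].
case: (ex_minnP h) => m /asboolP [t [dt wt]] _.
exists t; split => //; move: wt; rewrite /pd_width.
by case: (\max_(B <- t) _).
Qed.

Lemma dm j q n : q < n -> (j*n+q)%/n = j /\ (j*n+q)%%n = q.
Proof. move=> qn. rewrite divnMDl ?modnMDl ?divn_small ?modn_small ?addn0 //. lia. Qed.

Lemma dm2 a b n : a <= b -> a %/ n = b %/ n -> a %% n <= b %% n.
Proof. move=> H0 H1. have := divn_eq a n; have := divn_eq b n. rewrite H1. lia. Qed.

Lemma nth_lt (T : finType) (s : seq {set T}) j x : x \in nth set0 s j -> j < size s.
Proof. by case: (ltnP j (size s)) => // h; rewrite nth_default // inE. Qed.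

Lemma card_nth_le (T : finType) (s : seq {set T}) j : #|nth set0 s j| <= \max_(B <- s) #|B|.
Proof.
case: (ltnP j (size s)) => h; first by apply: leq_bigmax_seq => //; apply: mem_nth.
by rewrite nth_default // cards0.
Qed.

Definition FS (T : finType) k (E : 'I_k -> rel T) (S : {set 'I_k}) : rel T :=
  fun x y => [exists i in S, E i x y].

Definition good (T : finType) k (V : 'I_k -> {set T}) (E : 'I_k -> rel T)
   (S : {set 'I_k}) (s : seq {set T}) : Prop :=
 [/\ all (fun B : {set T} => B \subset \bigcup_(i in S) V i) s,
     (forall i x y, i \in S -> E i x y -> has (fun B : {set T} => (x \in B) && (y \in B)) s),
     (forall x, x \in \bigcup_(i in S) V i -> has (fun B : {set T} => x \in B) s),
     (forall x i j l, i <= j -> j <= l -> l < size s -> x \in nth set0 s i ->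
        x \in nth set0 s l -> x \in nth set0 s j) &
     ({in \bigcup_(i in S) V i &, forall x y, connect (FS E S) x y} /\
     \max_(B <- s) #|B| <= \sum_(i in S) (pathwidth (V i) (E i)).+1) ].

Lemma FS_U1 (T : finType) k (E : 'I_k -> rel T) S i x y :
  FS E (i |: S) x y = E i x y || FS E S x y.
Proof.
apply/existsP/orP => [[j /andP[]]|[h|/existsP[j /andP[jS h]]]].
- rewrite !inE => /orP[/eqP -> ->|jS h]; first by left.
  by right; apply/existsP; exists j; rewrite jS.
- by exists i; rewrite setU11.
- by exists j; rewrite inE jS orbT.
Qed.

Lemma step (T : finType) (e : rel T) k (V : 'I_k -> {set T}) (E : 'I_k -> rel T) S s i :
  simple_graph e -> acyclic e -> (forall j, subtree e (V j) (E j)) ->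
  good V E S s -> i \notin S ->
  (\bigcup_(j in S) V j = set0 \/ V i :&: \bigcup_(j in S) V j != set0) ->
  exists r, good V E (i |: S) r.
Proof.
move=> [esym eirr] eac sub [sU sE sV sC [sconn smax]] iS hint.
set U := \bigcup_(j in S) V j in sU sV sconn hint.
have [[Esym EV] _ Econn] := sub i.
have [t [[tV tE tVx tC] tmax]] := pw_dec (sub i).
have sEe : forall j x y, E j x y -> e x y.
  by move=> j x y; case: (sub j) => [[_ H] _ _] /H /andP[].
have FSe : forall x y, FS E S x y -> e x y.
  by move=> x y /existsP[j /andP[_]]; apply: sEe.
have FSU : forall x y, FS E S x y -> y \in U.
  move=> x y /existsP[j /andP[jS]]; case: (sub j) => [[_ H] _ _] /H /and3P[_ _ yV].
  by apply/bigcupP; exists j.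
have nthsU : forall j, nth set0 s j \subset U.
  move=> j; case: (ltnP j (size s)) => h; first by apply: (allP sU); apply: mem_nth.
  by rewrite nth_default // sub0set.
have nthtV : forall q, nth set0 t q \subset V i.
  move=> q; case: (ltnP q (size t)) => h; first by apply: (allP tV); apply: mem_nth.
  by rewrite nth_default // sub0set.
set n := (size t).+1.
have n0 : 0 < n by [].
pose Er := fun x y => [&& E i x y, x \notin U & y \notin U].
have Ersym : connect_sym Er.
  by apply: sym_connect_sym => x y; rewrite /Er Esym; case: (x \in U); case: (y \in U); rewrite /= ?andbF.
pose P := fun y c => (c \in U) && [exists d, [&& connect Er y d, E i c d & d \notin U]].
have Puniq : forall y c1 c2, P y c1 -> P y c2 -> c1 = c2.
  move=> y c1 c2 /andP[c1U /existsP[d1 /and3P[yd1 cd1 d1U]]]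
                 /andP[c2U /existsP[d2 /and3P[yd2 cd2 d2U]]].
  apply/eqP; apply/negPn/negP => c12.
  pose R := fun x z => [|| FS E S x z, Er x z, (x == c2) && (z == d2) | (x == d2) && (z == c2)].
  have Re : forall x z, R x z -> e x z.
    move=> x z /or4P[/FSe //|/and3P[/sEe //] _ _|/andP[/eqP -> /eqP ->]|/andP[/eqP -> /eqP ->]].
    - exact: sEe cd2.
    - by rewrite esym; apply: sEe cd2.
  have : connect R c1 d1.
    apply: (@connect_trans _ _ c2).
      apply: connect_sub (sconn _ _ c1U c2U) => x z h.
      by apply: connect1; rewrite /R h.
    apply: (@connect_trans _ _ d2).
      by apply: connect1; rewrite /R !eqxx !orbT.
    have : connect Er d2 d1.
      by apply: (@connect_trans _ _ y) => //; rewrite Ersym.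
    apply: connect_sub => x z h.
    by apply: connect1; rewrite /R h orbT.
  move=> /(tree_edge (conj esym eirr) eac Re) /(_ (sEe _ _ _ cd1)).
  rewrite /R => /or4P[/FSU|/and3P[_ /negP //]|/andP[/eqP c1c2 _]|/andP[/eqP c1d2 _]].
  - by rewrite (negPf d1U).
  - by rewrite c1c2 eqxx in c12.
  - by rewrite -c1d2 c1U in d2U.
pose h := fun y => if [pick c | P y c] is Some c then find (fun B : {set T} => c \in B) s else 0.
have hP : forall y c, P y c -> h y = find (fun B : {set T} => c \in B) s.
  move=> y c Pc; rewrite /h; case: pickP => [c' Pc'|/(_ c)]; last by rewrite Pc.
  by rewrite (Puniq _ _ _ Pc' Pc).
have hle : forall y, h y <= size s.
  by move=> y; rewrite /h; case: pickP => [c _|_] //; apply: find_size.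
pose f := fun m => nth set0 s (m %/ n) :|:
   [set d in nth set0 t (m %% n) | (d \notin U) && (h d == m %/ n)].
have inf : forall m x, (x \in f m) = (x \in nth set0 s (m %/ n)) ||
     [&& x \in nth set0 t (m %% n), x \notin U & h x == m %/ n].
  by move=> m x; rewrite !inE.
pose r := mkseq f ((size s).+1 * n).
have hasr : forall (a : pred {set T}) m, m < (size s).+1 * n -> a (f m) -> has a r.
  move=> a m mlt am; apply/(has_nthP set0); exists m; first by rewrite size_mkseq.
  by rewrite nth_mkseq.
have hasS2 : forall x y, has (fun B : {set T} => (x \in B) && (y \in B)) s ->
    has (fun B : {set T} => (x \in B) && (y \in B)) r.
  move=> x y /(has_nthP set0)[j0 j0lt /andP[xj yj]].
  have [d1 _] := dm j0 n0.
  rewrite addn0 in d1.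
  apply: (hasr _ (j0 * n)); first by nia.
  by rewrite /= !inf d1 xj yj.
have blk : forall x q, q < size t -> x \in nth set0 t q -> x \notin U ->
    exists2 m, m < (size s).+1 * n & [/\ x \in f m, m %/ n = h x & m %% n = q].
  move=> x q qlt xq xU.
  have qn : q < n by rewrite /n; lia.
  have [d1 d2] := dm (h x) qn.
  exists (h x * n + q); first by have := hle x; nia.
  by rewrite inf d1 d2 xq xU eqxx orbT.
have mixed : forall x y, E i x y -> x \in U -> y \notin U ->
    has (fun B : {set T} => (x \in B) && (y \in B)) r.
  move=> x y Exy xU yU.
  have Py : P y x by rewrite /P xU; apply/existsP; exists y; rewrite connect0 Exy yU.
  have hy := hP _ _ Py.
  have hx := sV x xU.
  have /EV /and3P[_ _ yV] := Exy.
  have /(has_nthP set0)[q qlt yq] := tVx y yV.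
  have [m mlt [ym mh _]] := blk y q qlt yq yU.
  apply: (hasr _ m mlt); rewrite /= ym andbT inf mh hy.
  by rewrite (nth_find set0 hx).
have U'E : \bigcup_(j in i |: S) V j = V i :|: U by rewrite big_setU1.
have sumE : \sum_(j in i |: S) (pathwidth (V j) (E j)).+1 =
   (pathwidth (V i) (E i)).+1 + \sum_(j in S) (pathwidth (V j) (E j)).+1.
  by rewrite big_setU1.
exists r; rewrite /good U'E sumE; split.
- apply/allP => B /mapP[m _ ->]; apply/subsetP => x.
  rewrite inf !inE => /orP[/(subsetP (nthsU _)) -> | /andP[/(subsetP (nthtV _)) -> _]].
    by rewrite orbT.
  by [].
- move=> j x y; rewrite !inE => /orP[/eqP -> | jS] Exy; last exact: hasS2 (sE _ _ _ jS Exy).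
  case xU: (x \in U); case yU: (y \in U).
  + have /existsP[j1 /andP[jS Ej]] := tree_edge (conj esym eirr) eac FSe (sconn _ _ xU yU) (sEe _ _ _ Exy).
    exact: hasS2 (sE _ _ _ jS Ej).
  + by apply: mixed; rewrite ?yU.
  + rewrite Esym in Exy; have := mixed _ _ Exy yU (negbT xU).
    by apply: sub_has => B; rewrite andbC.
  + have Er_xy : connect Er x y by apply: connect1; rewrite /Er Exy xU yU.
    have hxy : h x = h y.
      rewrite /h (@eq_pick _ (P x) (P y)) // => c; rewrite /P; congr (_ && _).
      by apply: eq_existsb => d; rewrite (same_connect Ersym Er_xy).
    have /(has_nthP set0)[q qlt /andP[xq yq]] := tE x y Exy.
    have [m mlt [xm mh mq]] := blk x q qlt xq (negbT xU).
    apply: (hasr _ m mlt); rewrite /= xm /= inf mh mq -hxy yq eqxx yU.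
    by rewrite orbT.
- move=> x; rewrite inE; case xU: (x \in U) => /=.
    move=> _; have := hasS2 x x.
    have -> : (fun B : {set T} => (x \in B) && (x \in B)) = (fun B => x \in B).
      by apply: funext => B; rewrite andbb.
    by apply; apply: sV.
  rewrite orbF => xV; have /(has_nthP set0)[q qlt xq] := tVx x xV.
  have [m mlt [xm _ _]] := blk x q qlt xq (negbT xU).
  exact: hasr _ m mlt xm.
- move=> x m1 m2 m3 m12 m23; rewrite size_mkseq => m3lt.
  rewrite !nth_mkseq; try lia.
  rewrite !inf; case xU: (x \in U) => /=.
  + rewrite !andbF !orbF => x1 x3.
    apply: (sC x (m1 %/ n) _ (m3 %/ n)); rewrite ?leq_div2r //.
    exact: nth_lt x3.
  + have nU : forall j, x \in nth set0 s j = false.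
      by move=> j; apply/negP => /(subsetP (nthsU _)); rewrite xU.
    rewrite !nU /= => /andP[x1 /eqP h1] /andP[x3 /eqP h3].
    have e2 : m2 %/ n = h x.
      apply/eqP; rewrite eqn_leq; apply/andP; split.
        by rewrite h3 leq_div2r.
      by rewrite h1 leq_div2r.
    rewrite e2 eqxx andbT.
    apply: (tC x (m1 %% n) _ (m3 %% n)).
    * by apply: dm2 => //; rewrite e2.
    * by apply: dm2 => //; rewrite e2.
    * exact: nth_lt x3.
    * exact: x1.
    * exact: x3.
- split.
  + have liftS : forall a b, connect (FS E S) a b -> connect (FS E (i |: S)) a b.
      by move=> a b; apply: connect_sub => u w uw; apply: connect1; rewrite FS_U1 uw orbT.
    have liftE : forall a b, connect (E i) a b -> connect (FS E (i |: S)) a b.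
      by move=> a b; apply: connect_sub => u w uw; apply: connect1; rewrite FS_U1 uw.
    have cV : {in V i &, forall a b, connect (FS E (i |: S)) a b}.
      by move=> a b aV bV; apply: liftE; apply: Econn.
    have cU : {in U &, forall a b, connect (FS E (i |: S)) a b}.
      by move=> a b aU bU; apply: liftS; apply: sconn.
    have zz : U != set0 -> exists2 z, z \in V i & z \in U.
      move=> Un0; case: hint => [U0|]; first by rewrite U0 eqxx in Un0.
      by case/set0Pn => z; rewrite inE => /andP[zV zU]; exists z.
    have mix1 : forall a b, a \in V i -> b \in U -> connect (FS E (i |: S)) a b.
      move=> a b aV bU.
      have [|z zV zU] := zz; first by apply/set0Pn; exists b.
      by apply: (@connect_trans _ _ z); [apply: cV | apply: cU].
    have mix2 : forall a b, a \in U -> b \in V i -> connect (FS E (i |: S)) a b.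
      move=> a b aU bV.
      have [|z zV zU] := zz; first by apply/set0Pn; exists a.
      by apply: (@connect_trans _ _ z); [apply: cU | apply: cV].
    move=> x y; rewrite !inE => /orP[xV|xU] /orP[yV|yU].
    * exact: cV.
    * exact: mix1.
    * exact: mix2.
    * exact: cU.
  + apply/bigmax_leqP_seq => B /mapP[m _ ->] _.
    rewrite addnC; apply: leq_trans (leq_add (leq_trans (card_nth_le s (m %/ n)) smax) (leq_trans (card_nth_le t (m %% n)) tmax)).
    rewrite /f cardsU; apply: leq_trans (leq_subr _ _) _; rewrite leq_add2l.
    by apply: subset_leq_card; apply/subsetP => d; rewrite inE => /andP[].
Qed.

Lemma grow (T : finType) (e : rel T) k (V : 'I_k -> {set T}) (E : 'I_k -> rel T) :
  is_tree e -> (forall j, subtree e (V j) (E j)) ->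
  (forall x y, e x y -> exists i, E i x y) ->
  forall j, j <= k -> exists (S : {set 'I_k}) (s : seq {set T}), #|S| = j /\ good V E S s.
Proof.
move=> [sg T0 econn eac] sub cov; elim=> [|j IH] jk.
  exists set0, [::]; split; first by rewrite cards0.
  split => //.
  - by move=> i x y; rewrite in_set0.
  - by move=> x; rewrite big_set0 in_set0.
  - split; first by move=> x y; rewrite big_set0 in_set0.
    by rewrite big_nil.
have [S [s [cS gS]]] := IH (ltnW jk).
have [i0 i0S] : exists i, i \notin S.
  case: (pickP (fun i => i \notin S)) => [i0 H|H]; first by exists i0.
  have : [set: 'I_k] \subset S.
    by apply/subsetP => x _; have := H x; move/negbFE.
  move/subset_leq_card; rewrite cardsT card_ord; lia.
suff [i [iS hint]] : exists i, i \notin S /\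
   (\bigcup_(j in S) V j = set0 \/ V i :&: \bigcup_(j in S) V j != set0).
  have [r gr] := step (V := V) (E := E) (s := s) sg eac sub gS iS hint.
  by exists (i |: S), r; rewrite cardsU1 iS cS.
set U := \bigcup_(j in S) V j.
case U0: (U == set0).
  by exists i0; split => //; left; apply/eqP.
case: (pickP (fun y => y \notin U)) => [y yU | allU].
  have /set0Pn [x xU] : U != set0 by rewrite U0.
  have [u [w [euw uU wU]]] := cross_edge (econn x y) xU yU.
  have [i Euw] := cov _ _ euw.
  have [[_ EV] _ _] := sub i.
  have /and3P[_ uV wV] := EV _ _ Euw.
  exists i; split.
    apply/negP => iS; move/negP: wU; apply; apply/bigcupP; by exists i.
  by right; apply/set0Pn; exists u; rewrite inE uV uU.
exists i0; split => //; right.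
have [_ /set0Pn [v vV] _] := sub i0.
apply/set0Pn; exists v; rewrite inE vV /=.
by have := allU v; move/negbFE.
Qed.

Theorem corollary8 (T : finType) (e : rel T) (k : nat)
    (V : 'I_k -> {set T}) (E : 'I_k -> rel T) :
  is_tree e ->
  (forall i, subtree e (V i) (E i)) ->
  \bigcup_(i < k) V i = [set: T] ->
  (forall x y, e x y -> exists i, E i x y) ->
  (pathwidth [set: T] e).+1 <= \sum_(i < k) (pathwidth (V i) (E i)).+1.
Proof.
move=> tr sub covV cov.
have [S [s [cS [sU sE sV sC [_ smax]]]]] := grow tr sub cov (leqnn k).
have ST : S = [set: 'I_k].
  apply/eqP; rewrite eqEcard subsetT cardsT card_ord cS leqnn //.
subst S.
have inU : forall x, x \in \bigcup_(i in [set: 'I_k]) V i.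
  move=> x; have : x \in \bigcup_(i < k) V i by rewrite covV in_setT.
  case/bigcupP => i _ xi; apply/bigcupP; exists i => //; exact: in_setT.
have pd : path_decomposition [set: T] e s.
  split.
  - by apply/allP => B _; apply: subsetT.
  - by move=> x y /cov [i Ei]; apply: (sE i) => //; exact: in_setT.
  - by move=> x _; apply: sV.
  - exact: sC.
have := pw_le pd; rewrite /pd_width.
have sumE : \sum_(i in [set: 'I_k]) (pathwidth (V i) (E i)).+1 =
          \sum_(i < k) (pathwidth (V i) (E i)).+1.
  by apply: eq_bigl => i; rewrite in_setT.
rewrite sumE in smax.
have kpos : 0 < k.
  case: tr => _ /card_gt0P [x _] _ _.
  have : x \in \bigcup_(i < k) V i by rewrite covV in_setT.
  by case/bigcupP => i _ _; apply: leq_ltn_trans (ltn_ord i).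
have spos : 0 < \sum_(i < k) (pathwidth (V i) (E i)).+1.
  by rewrite (bigD1 (Ordinal kpos)).
lia.
Qed.
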